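(* Let $K$ be a field, let $\Sigma$ be a rational pointed fan in $\mathbb{R}^d$, let $\mathcal{M}_\Sigma$ be a monoidal complex supported by $\Sigma$, and let $C_1,\dots,C_j,D\in\Sigma$. Then in $K[\mathcal{M}_\Sigma]$: (i) $\mathfrak p_{C_1\cap\dots\cap C_j}=\mathfrak p_{C_1}+\dots+\mathfrak p_{C_j}$; (ii) $\mathfrak p_D+\bigcap_{i=1}^t\mathfrak p_{C_i}=\bigcap_{i=1}^t(\mathfrak p_D+\mathfrak p_{C_i})$ (for any $t\le j$ cones $C_1,\dots,C_t$).
   Context: A rational pointed fan $\Sigma$ in $\mathbb{R}^d$ is a finite collection of rational pointed polyhedral cones closed under taking faces, such that the intersection of two cones of $\Sigma$ is a common face of both. A monoidal complex supported by $\Sigma$ is a set $\mathcal{M}_\Sigma=\{M_C\subseteq\mathbb{Z}^d : C\in\Sigma\}$ of affine monoids such that the cone generated by $M_C$ is $C$ and $M_{C'}=M_C\cap C'$ whenever $C'\subseteq C$ are in $\Sigma$. With $|\mathcal{M}_\Sigma|=\bigcup_C M_C$, the toric face ring $K[\mathcal{M}_\Sigma]$ has $K$-basis $\{x^a: a\in|\mathcal{M}_\Sigma|\}$ with $x^ax^b=x^{a+b}$ if $a,b$ lie in a common $M_C$ and $0$ otherwise. For $C\in\Sigma$, $\mathfrak p_C$ is the ideal generated by the $x^a$ with $a\in|\mathcal{M}_\Sigma|\setminus M_C$. *)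

(* Defs.v *)
From HB Require Import structures.
From mathcomp Require Import all_boot all_order all_algebra.
From mathcomp Require Import boolp classical_sets cardinality fsbigop reals.
Set Implicit Arguments. Unset Strict Implicit. Unset Printing Implicit Defensive.
Import Order.TTheory GRing.Theory Num.Theory.
Local Open Scope classical_set_scope.
Local Open Scope ring_scope.

Section Geometry.
Variables (R : realType) (d : nat).

Definition vecR := 'rV[R]_d.
Definition vecZ := 'rV[int]_d.
Definition toR (a : vecZ) : vecR := map_mx (fun z : int => z%:~R) a.

Definition dotR (u x : vecR) : R := \sum_(i < d) u 0 i * x 0 i.

Definition cone_of (A : set vecR) : set vecR :=
  [set x | exists s : seq vecR, (forall v, v \in s -> A v) /\
     exists c : 'I_(size s) -> R, (forall i, 0 <= c i) /\
       x = \sum_(i < size s) c i *: s`_i].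

Definition rational_polyhedral_cone (C : set vecR) : Prop :=
  exists s : seq vecZ, C = cone_of [set v | v \in map toR s].

Definition pointed (C : set vecR) : Prop :=
  forall x, C x -> C (- x) -> x = 0.

Definition face_of (F C : set vecR) : Prop :=
  exists u : vecR, (forall x, C x -> 0 <= dotR u x) /\
    F = C `&` [set x | dotR u x = 0].

Definition rational_pointed_fan (Sigma : set (set vecR)) : Prop :=
  [/\ finite_set Sigma,
      (forall C, Sigma C -> rational_polyhedral_cone C /\ pointed C),
      (forall C F, Sigma C -> face_of F C -> Sigma F) &
      (forall C C', Sigma C -> Sigma C' ->
         face_of (C `&` C') C /\ face_of (C `&` C') C')].

Definition affine_monoid (M : set vecZ) : Prop :=
  exists s : seq vecZ, M = [set a | exists c : 'I_(size s) -> nat,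
                                     a = \sum_(i < size s) s`_i *+ c i].

Definition monoidal_complex (Sigma : set (set vecR)) (M : set vecR -> set vecZ)
  : Prop :=
  [/\ (forall C, Sigma C -> affine_monoid (M C)),
      (forall C, Sigma C -> cone_of (toR @` M C) = C) &
      (forall C C', Sigma C -> Sigma C' -> C' `<=` C ->
         M C' = M C `&` [set a | C' (toR a)])].

Definition support (Sigma : set (set vecR)) (M : set vecR -> set vecZ) : set vecZ :=
  \bigcup_(C in Sigma) M C.

End Geometry.

Section ToricFaceRing.
Variables (R : realType) (d : nat) (K : fieldType).
Variables (Sigma : set (set (vecR R d))) (M : set (vecR R d) -> set (vecZ d)).

(* Elements of K[M_Sigma] are represented by their coefficient functions
   a |-> coefficient of x^a: finitely supported, support inside |M_Sigma|. *)
Definition elt := vecZ d -> K.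

Definition tfr (f : elt) : Prop :=
  finite_set [set a | f a != 0] /\ (forall a, f a != 0 -> support Sigma M a).

Definition tfr_add (f g : elt) : elt := fun a => f a + g a.
Definition tfr_opp (f : elt) : elt := fun a => - f a.
Definition tfr_zero : elt := fun _ => 0.

Definition monom (a : vecZ d) : elt := fun b => if b == a then 1 else 0.

Definition common_cone (a b : vecZ d) : Prop :=
  exists C, Sigma C /\ M C a /\ M C b.

(* x^a x^b = x^(a+b) if a, b lie in a common M_C, and 0 otherwise,
   extended bilinearly *)
Definition tfr_mul (f g : elt) : elt := fun c =>
  \sum_(p \in [set p : vecZ d * vecZ d | [/\ f p.1 != 0, g p.2 != 0,
                                           p.1 + p.2 = c & common_cone p.1 p.2]])
     f p.1 * g p.2.

Definition is_ideal (I : set elt) : Prop :=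
  [/\ I `<=` tfr, I tfr_zero,
      (forall f g, I f -> I g -> I (tfr_add f g)),
      (forall f, I f -> I (tfr_opp f)) &
      (forall r f, tfr r -> I f -> I (tfr_mul r f))].

Definition ideal_gen (G : set elt) : set elt :=
  [set f | forall I, is_ideal I -> G `<=` I -> I f].

Definition ideal_add (I J : set elt) : set elt :=
  [set h | exists f g, I f /\ J g /\ h = tfr_add f g].

Definition ideal_zero : set elt := [set tfr_zero].

Definition prime_p (C : set (vecR R d)) : set elt :=
  ideal_gen [set monom a | a in support Sigma M `\` M C].

End ToricFaceRing.

(* Main.v *)
Require Import Defs.
From HB Require Import structures.
From mathcomp Require Import all_boot all_order all_algebra.
From mathcomp Require Import finmap.
From mathcomp Require Import boolp classical_sets cardinality fsbigop reals.
Import Order.TTheory GRing.Theory Num.Theory.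
Set Implicit Arguments. Unset Strict Implicit. Unset Printing Implicit Defensive.
Local Open Scope classical_set_scope.
Local Open Scope ring_scope.

Section Gen.
Variables (R : realType) (d : nat) (K : fieldType).
Variables (Sigma : set (set (vecR R d))) (M : set (vecR R d) -> set (vecZ d)).

Definition V (S : set (vecZ d)) : set (elt d K) :=
  [set f | tfr Sigma M f /\ forall a, S a -> f a = 0].

Lemma tfr_sub (f g : elt d K) : tfr Sigma M f ->
  (forall a, g a != 0 -> f a != 0) -> tfr Sigma M g.
Proof.
move=> [fin sup] H; split; last by move=> a /H /sup.
by apply: sub_finite_set fin => a /= /H.
Qed.

Lemma tfr_add_ (f g : elt d K) : tfr Sigma M f -> tfr Sigma M g ->
  tfr Sigma M (tfr_add f g).
Proof.
move=> [ff sf] [fg sg].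
have H : forall a, tfr_add f g a != 0 -> f a != 0 \/ g a != 0.
  move=> a; rewrite /tfr_add /=; case: (eqVneq (f a) 0) => [->|]; last by left.
  by rewrite add0r; right.
split.
  apply: (@sub_finite_set _ _ ([set a | f a != 0] `|` [set a | g a != 0])).
    by move=> a /= /H.
  by rewrite finite_setU.
by move=> a /H [/sf|/sg].
Qed.

Lemma tfr_zero_ : tfr Sigma M (@tfr_zero d K).
Proof.
split; last by move=> a; rewrite /tfr_zero eqxx.
apply: (@sub_finite_set _ _ set0); last exact: finite_set0.
by move=> a /=; rewrite /tfr_zero eqxx.
Qed.

Lemma V_add S T : ideal_add (V S) (V T) = V (S `&` T).
Proof.
apply/seteqP; split.
  move=> h [f [g [[tf Sf] [[tg Tg] ->]]]]; split; first exact: tfr_add_.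
  by move=> a [/Sf Sa /Tg Ta]; rewrite /tfr_add /= Sa Ta addr0.
move=> f [tf STf].
exists (fun a => if `[< S a >] then 0 else f a).
exists (fun a => if `[< S a >] then f a else 0).
split; [split|split; [split|]].
- eapply tfr_sub; first exact: tf.
  move=> a /=; by case: ifP => //; rewrite eqxx.
- by move=> a Sa; rewrite ifT //; apply/asboolP.
- eapply tfr_sub; first exact: tf.
  move=> a /=; by case: ifP => //; rewrite eqxx.
- move=> a Ta; case: ifPn => // /asboolP Sa; exact: STf.
- apply/funext => a; rewrite /tfr_add; case: ifP => _; by rewrite ?add0r ?addr0.
Qed.

Lemma V_cap (I : Type) (P : set I) (S : I -> set (vecZ d)) : (exists i, P i) ->
  \bigcap_(i in P) V (S i) = V (\bigcup_(i in P) S i).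
Proof.
move=> [i0 Pi0]; apply/seteqP; split.
  move=> f H; split; first by case: (H i0 Pi0).
  by move=> a [i Pi Sia]; case: (H i Pi) => _; apply.
move=> f [tf Sf] i Pi; split => // a Sia; apply: Sf; by exists i.
Qed.

Lemma V_setT : V setT = @ideal_zero d K.
Proof.
apply/seteqP; split.
  move=> f [_ H]; rewrite /ideal_zero /=; apply/funext => a; exact: H.
move=> f; rewrite /ideal_zero /= => ->; split; first exact: tfr_zero_.
by [].
Qed.


Lemma mono0 (S : set (vecZ d)) : affine_monoid S -> S 0.
Proof.
move=> [s ->]; exists (fun _ => 0%N).
by rewrite big1 // => i _; rewrite mulr0n.
Qed.

Lemma monoD (S : set (vecZ d)) a b : affine_monoid S -> S a -> S b -> S (a + b).
Proof.
move=> [s ->] [ca ->] [cb ->]; exists (fun i => (ca i + cb i)%N).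
by rewrite -big_split /=; apply: eq_bigr => i _; rewrite mulrnDr.
Qed.

Lemma toRD (a b : vecZ d) : toR R (a + b) = toR R a + toR R b.
Proof. by apply/matrixP => i k; rewrite !mxE intrD. Qed.

Lemma dotRD (u x y : vecR R d) : dotR u (x + y) = dotR u x + dotR u y.
Proof. by rewrite /dotR -big_split /=; apply: eq_bigr => i _; rewrite mxE mulrDr. Qed.

Lemma toR_in C a : monoidal_complex Sigma M -> Sigma C -> M C a -> C (toR R a).
Proof.
move=> [_ cone _] SC Ma; rewrite -(cone C SC).
exists [:: toR R a]; split; first by move=> v; rewrite inE => /eqP ->; exists a.
exists (fun _ => 1); split; first by move=> _; exact: ler01.
by rewrite big_ord1 scale1r.
Qed.

Lemma key C C' a b : rational_pointed_fan Sigma -> monoidal_complex Sigma M ->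
  Sigma C -> Sigma C' -> M C' a -> M C' b -> M C (a + b) -> M C b.
Proof.
move=> fan mc SC SC' Ma Mb Mab.
case: (fan) => _ _ faceS inter.
case: (inter C' C SC' SC) => [[u [upos Fdef]] _].
have SF : Sigma (C' `&` C) by apply: (faceS C'); [exact: SC'| exists u].
have aC' := toR_in mc SC' Ma; have bC' := toR_in mc SC' Mb.
have mab : M C' (a + b) by apply: monoD => //; case: mc => mon _ _; exact: mon.
have abF : (C' `&` C) (toR R (a + b)).
  by split; [exact: toR_in mc SC' mab| exact: toR_in mc SC Mab].
move: (abF); rewrite {1}Fdef => -[_ /=]; rewrite toRD dotRD => /eqP.
rewrite paddr_eq0 ?upos // => /andP[_ /eqP ub].
have bF : (C' `&` C) (toR R b) by rewrite Fdef; split.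
case: mc => _ _ sub.
have : M (C' `&` C) b.
  rewrite (sub C' (C' `&` C)) //.
rewrite (sub C (C' `&` C)) //; first by case.
Qed.


Lemma mul_supp (r f : elt d K) c : tfr_mul Sigma M r f c != 0 ->
  exists p : vecZ d * vecZ d,
    [/\ r p.1 != 0, f p.2 != 0, p.1 + p.2 = c & common_cone Sigma M p.1 p.2].
Proof.
move=> H; apply: contrapT => N; move: H; rewrite /tfr_mul fsbig1 ?eqxx //.
by move=> p Sp; exfalso; apply: N; exists p.
Qed.

Lemma tfr_mul_ (r f : elt d K) : (forall C, Sigma C -> affine_monoid (M C)) ->
  tfr Sigma M r -> tfr Sigma M f -> tfr Sigma M (tfr_mul Sigma M r f).
Proof.
move=> mon [fr _] [ff _]; split.
  apply: (@sub_finite_set _ _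
    ((fun p : vecZ d * vecZ d => p.1 + p.2) @` ([set a | r a != 0] `*` [set b | f b != 0]))).
    move=> c /= /mul_supp [p [rp fp <- _]]; exists p => //.
  by apply: finite_image; apply: finite_setX.
move=> c /mul_supp [p [_ _ <- [C' [SC' [M1 M2]]]]].
by exists C' => //; apply: monoD => //; apply: mon.
Qed.

Lemma V_ideal C : rational_pointed_fan Sigma -> monoidal_complex Sigma M ->
  Sigma C -> is_ideal Sigma M (V (M C)).
Proof.
move=> fan mc SC; split.
- by move=> f [].
- by split; [exact: tfr_zero_|].
- move=> f g [tf Hf] [tg Hg]; split; first exact: tfr_add_.
  by move=> a Ma; rewrite /tfr_add /= Hf // Hg // addr0.
- move=> f [tf Hf]; split.
    by eapply tfr_sub; first exact: tf; move=> a; rewrite /tfr_opp oppr_eq0.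
  by move=> a Ma; rewrite /tfr_opp /= Hf // oppr0.
- move=> r f tr [tf Hf]; split; first by apply: tfr_mul_ => //; case: mc.
  move=> c Mc; apply/eqP; apply: contrapT => /negP /mul_supp [p [_ fp pc [C' [SC' [M1 M2]]]]].
  have : M C p.2 by apply: (key fan mc SC SC' M1 M2); rewrite pc.
  by move/Hf => f0; rewrite f0 eqxx in fp.
Qed.

Lemma gens_V (C : set (vecR R d)) : [set monom K a | a in Defs.support Sigma M `\` M C] `<=` V (M C).
Proof.
move=> _ [a [Sa Ma] <-]; split.
  split.
    apply: (@sub_finite_set _ _ [set a]); last exact: finite_set1.
    move=> b /=; rewrite /monom; case: (eqVneq b a) => [-> _ //|_].
    by rewrite eqxx.
  move=> b; rewrite /monom; case: (eqVneq b a) => [->|_]; last by rewrite eqxx.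
  by move=> _; exact: Sa.
move=> b Mb; rewrite /monom; case: (eqVneq b a) => // eba.
by rewrite eba in Mb.
Qed.


Lemma scal_mul (k : K) a C0 : Sigma C0 -> M C0 a -> M C0 0 ->
  tfr_mul Sigma M (fun b => if b == 0 then k else 0) (monom K a) =
  fun b => if b == a then k else 0.
Proof.
move=> SC0 Ma M0; apply/funext => c; rewrite /tfr_mul.
case: (eqVneq k 0) => [k0|kn0].
  rewrite fsbig1; first by case: ifP.
  by move=> p _; rewrite k0; case: ifP => _; rewrite mul0r.
case: (eqVneq c a) => [->|cna].
  rewrite (_ : [set p | _] = [set (0, a)]).
    by rewrite fsbig_set1 /= /monom !eqxx mulr1.
  apply/seteqP; split.
    move=> [p1 p2] /= [r1 m2 e _].
    move: r1 m2; rewrite /monom; case: (eqVneq p1 0) => [-> _|]; last by rewrite eqxx.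
    by case: (eqVneq p2 a) => [-> _|]; last by rewrite eqxx.
  move=> _ -> /=; split; first by rewrite eqxx.
  - by rewrite /monom eqxx oner_eq0.
  - by rewrite add0r.
  - by exists C0.
rewrite fsbig1 //= => -[p1 p2] /= [r1 m2 e _]; exfalso.
move: r1 m2; rewrite /monom; case: (eqVneq p1 0) => [e1 _|]; last by rewrite eqxx.
case: (eqVneq p2 a) => [e2 _|]; last by rewrite eqxx.
by move: cna; rewrite -e e1 e2 add0r eqxx.
Qed.


Lemma prime_V C : rational_pointed_fan Sigma -> monoidal_complex Sigma M ->
  Sigma C -> @prime_p R d K Sigma M C = V (M C).
Proof.
move=> fan mc SC; apply/seteqP; split.
  by move=> f Hf; apply: Hf; [exact: V_ideal | exact: gens_V].
move=> f Vf I II GI.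
have [X eX] : exists X : {fset vecZ d}, [set a | f a != 0] = [set` X].
  by apply/finite_fsetP; case: Vf => [[]].
suff IND : forall (s : seq (vecZ d)) g, V (M C) g ->
    (forall a, g a != 0 -> a \in s) -> I g.
  apply: (IND X) => // a fa.
  have : [set a | f a != 0] a by [].
  by rewrite eX.
case: II => Isub I0 Iadd Iopp Imul.
elim => [|x s IH] g [tg Hg] Hs.
  have -> : g = @tfr_zero d K.
    by apply/funext => a; apply/eqP; apply: contraT => /Hs.
  exact: I0.
pose g' := fun b => if b == x then 0 else g b.
have Ig' : I g'.
  apply: IH; first split.
  - eapply tfr_sub; first exact: tg.
    by move=> a; rewrite /g'; case: ifP => // _; rewrite eqxx.
  - by move=> a Ma; rewrite /g'; case: ifP => // _; exact: Hg.
  - move=> a; rewrite /g'; case: (eqVneq a x) => [_|ax]; first by rewrite eqxx.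
    by move=> /Hs; rewrite inE (negbTE ax).
case: (eqVneq (g x) 0) => [gx0|gxn0].
  suff -> : g = g' by [].
  by apply/funext => b; rewrite /g'; case: eqVneq => // ->.
have -> : g = tfr_add g' (fun b => if b == x then g x else 0).
  apply/funext => b; rewrite /tfr_add /g'.
  by case: eqVneq => [->|_]; rewrite ?add0r ?addr0.
apply: Iadd => //.
case: (tg) => _ sup; have [C0 SC0 MC0x] := sup x gxn0.
have mon0 : M C0 0 by apply: mono0; case: mc => mon _ _; exact: mon.
rewrite -(@scal_mul (g x) x C0) //.
apply: Imul.
  split.
    apply: (@sub_finite_set _ _ [set 0]); last exact: finite_set1.
    by move=> b /=; case: (eqVneq b 0) => [-> _ //|_]; rewrite eqxx.
  by move=> b; case: (eqVneq b 0) => [-> _|_]; [exists C0 | rewrite eqxx].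
apply: GI; exists x => //; split; first by exists C0.
by move=> Mx; move: gxn0; rewrite Hg // eqxx.
Qed.

End Gen.

Section Main.
Variables (R : realType) (d : nat) (K : fieldType).
Variables (Sigma : set (set (vecR R d))) (M : set (vecR R d) -> set (vecZ d)).
Variables (j : nat) (C : 'I_j -> set (vecR R d)).

Lemma cap_in : rational_pointed_fan Sigma -> (forall i, Sigma (C i)) ->
  forall s : seq 'I_j, s != [::] ->
  Sigma (\bigcap_(i in [set i | i \in s]) C i).
Proof.
move=> fan SC; elim => [//|x s IH] _.
case: (eqVneq s [::]) => [->|sn].
  rewrite (_ : \bigcap_(i in _) _ = C x) //.
  apply/seteqP; split => y /=.
    by move=> H; apply: H; exact: mem_head.
  by move=> Cy i; rewrite /= mem_seq1 => /eqP ->.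
rewrite (_ : \bigcap_(i in _) _ = C x `&` \bigcap_(i in [set i | i \in s]) C i).
  case: fan => _ _ faceS inter.
  have [F _] := inter (C x) _ (SC x) (IH sn).
  exact: (faceS (C x)).
apply/seteqP; split => y /=.
  move=> H; split; first by apply: H; exact: mem_head.
  by move=> i si; apply: H; rewrite /= inE si orbT.
by move=> [Cy H] i; rewrite /= inE => /orP[/eqP ->|/H].
Qed.

Lemma foldr_V (s : seq 'I_j) :
  rational_pointed_fan Sigma -> monoidal_complex Sigma M -> (forall i, Sigma (C i)) ->
  foldr (fun i acc => ideal_add (@prime_p R d K Sigma M (C i)) acc)
        (@ideal_zero d K) s =
  @V R d K Sigma M (\bigcap_(i in [set i | i \in s]) M (C i)).
Proof.
move=> fan mc SC; elim: s => [|x s IH] /=.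
  rewrite (_ : \bigcap_(i in _) _ = setT); first by rewrite V_setT.
  by apply/seteqP; split => y //= _ i.
rewrite IH prime_V // V_add; congr V.
apply/seteqP; split => y /=.
  by move=> [My H] i; rewrite /= inE => /orP[/eqP ->|/H].
move=> H; split; first by apply: H; exact: mem_head.
by move=> i si; apply: H; rewrite /= inE si orbT.
Qed.

End Main.

Theorem lemma2p3 (K : fieldType) (R : realType) (d : nat)
    (Sigma : set (set (vecR R d))) (M : set (vecR R d) -> set (vecZ d))
    (j : nat) (C : 'I_j -> set (vecR R d)) (D : set (vecR R d)) :
  rational_pointed_fan Sigma -> monoidal_complex Sigma M ->
  (0 < j)%N -> (forall i, Sigma (C i)) -> Sigma D ->
  (* (i) *)
  @prime_p R d K Sigma M (\bigcap_(i in [set: 'I_j]) C i) =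
    foldr (fun i acc => ideal_add (@prime_p R d K Sigma M (C i)) acc)
          (@ideal_zero d K) (enum 'I_j)
  /\
  (* (ii) for the first t of the cones, 1 <= t <= j *)
  (forall t : nat, (0 < t <= j)%N ->
     ideal_add (@prime_p R d K Sigma M D)
               (\bigcap_(i in [set i : 'I_j | (i < t)%N]) @prime_p R d K Sigma M (C i)) =
     \bigcap_(i in [set i : 'I_j | (i < t)%N])
        ideal_add (@prime_p R d K Sigma M D) (@prime_p R d K Sigma M (C i))).
Proof.
move=> fan mc j0 SC SD; split.
  have i0 : 'I_j := Ordinal j0.
  have EG : \bigcap_(i in [set: 'I_j]) C i = \bigcap_(i in [set i | i \in enum 'I_j]) C i.
    apply/seteqP; split => y H i _; apply: H => //=.
    by rewrite mem_enum.
  have SG : Sigma (\bigcap_(i in [set: 'I_j]) C i).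
    rewrite EG; apply: cap_in => //.
    by apply/eqP => /(f_equal size); rewrite size_enum_ord => jz; move: j0; rewrite jz.
  rewrite foldr_V // prime_V //; congr V.
  case: (mc) => mon cone sub.
  apply/seteqP; split => a /=.
    move=> Ma i _.
    by rewrite (sub (C i) (\bigcap_(i in [set: 'I_j]) C i)) // in Ma; [case: Ma | move=> y; apply].
  move=> H.
  rewrite (sub (C i0) (\bigcap_(i in [set: 'I_j]) C i)) //; last by move=> y; apply.
  split; first by apply: H => /=; rewrite mem_enum.
  move=> i _; apply: (toR_in mc (SC i)); apply: H => /=; by rewrite mem_enum.
move=> t /andP[t0 tj].
have ne : exists i : 'I_j, [set i : 'I_j | (i < t)%N] i by exists (Ordinal j0).
rewrite [in LHS](eq_bigcapr (G := fun i => @V R d K Sigma M (M (C i)))); last by move=> i _; exact: prime_V.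
rewrite [in RHS](eq_bigcapr (G := fun i => @V R d K Sigma M (M D `&` M (C i)))); last first.
  by move=> i _; rewrite !prime_V // V_add.
have E1 := @V_cap R d K Sigma M _ _ (fun i => M (C i)) ne.
have E2 := @V_cap R d K Sigma M _ _ (fun i => M D `&` M (C i)) ne.
simpl in E1, E2.
by rewrite prime_V // E1 E2 V_add setI_bigcupr.
Qed.
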